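(* For every reachable pointed lasso automaton $X=(X_1,X_2,\overline{x},\delta_1,\delta_2,\delta_3)$, the pair $(\ker\delta_1^\sharp,\ker\delta^\sharp)$ is a bisimulation congruence on $(\Sigma^\ast,\Sigma^{\ast+})$; and if there is a morphism $h:X\to Y$ between reachable pointed lasso automata, then $\ker\delta_{X,1}^\sharp\subseteq\ker\delta_{Y,1}^\sharp$ and $\ker\delta_X^\sharp\subseteq\ker\delta_Y^\sharp$. (That is, $T(X)=(\ker\delta_1^\sharp,\ker\delta^\sharp)$ defines a functor $T$ from reachable pointed lasso automata to bisimulation congruences ordered by inclusion.)
   Context: $\Sigma$ is a finite alphabet, $\Sigma^+$ nonempty words, $\Sigma^{\ast+}=\Sigma^\ast\times\Sigma^+$ the lassos. A pointed lasso automaton is $(X_1,X_2,\overline{x},\delta_1,\delta_2,\delta_3)$ with disjoint $X_1,X_2$, $\overline{x}\in X_1$, $\delta_1:X_1\times\Sigma\to X_1$, $\delta_2:X_1\times\Sigma\to X_2$, $\delta_3:X_2\times\Sigma\to X_2$. Extend $\delta_1,\delta_3$ to words, set $\delta_\circ(x,av)=\delta_3(\delta_2(x,a),v)$ for $x\in X_1$, and $\delta(x,(u,v))=\delta_\circ(\delta_1(x,u),v)$. It is reachable if every $x\in X_1$ is $\delta_1(\overline{x},w)$ for some $w\in\Sigma^\ast$ and every $y\in X_2$ is $\delta(\overline{x},(u,v))$ for some lasso. A morphism is a pair of maps $h_1:X_1\to Y_1$, $h_2:X_2\to Y_2$ preserving initial states and commuting with $\delta_1,\delta_2,\delta_3$.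 $\ker\delta_1^\sharp=\{(u,v)\in\Sigma^\ast\times\Sigma^\ast\mid\forall x\in X_1:\delta_1(x,u)=\delta_1(x,v)\}$, $\ker\delta^\sharp=\{((u,v),(u',v'))\in\Sigma^{\ast+}\times\Sigma^{\ast+}\mid\forall x\in X_1:\delta(x,(u,v))=\delta(x,(u',v'))\}$. A bisimulation congruence is a pair $(C_1,C_2)$ of equivalence relations on $\Sigma^\ast$ and $\Sigma^{\ast+}$ such that: $C_1$ is a monoid congruence on $\Sigma^\ast$; $(w,w')\in C_1$ and $((u,v),(u',v'))\in C_2$ imply $((wu,v),(w'u',v'))\in C_2$; $(u,u')\in C_1$ implies $(ua,u'a)\in C_1$ and $((u,a),(u',a))\in C_2$ for $a\in\Sigma$; $((u,v),(u',v'))\in C_2$ implies $((u,va),(u',v'a))\in C_2$. *)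

(* Defs.v *)
From mathcomp Require Import all_boot.
Set Implicit Arguments. Unset Strict Implicit. Unset Printing Implicit Defensive.

(* Alphabet: a finite type S. Words Sigma^* : seq S.
   Nonempty words Sigma^+ : the subtype of nonempty sequences.
   Lassos Sigma^{*+} : seq S * neword S. *)

Section Words.
Variable S : finType.

Definition neword := {w : seq S | w != [::]}.
Definition lasso := (seq S * neword)%type.

Lemma rcons_neq_nil (v : seq S) (a : S) : rcons v a != [::].
Proof. by case: v. Qed.

Definition ne_single (a : S) : neword := exist _ [:: a] isT.
Definition ne_rcons (v : neword) (a : S) : neword :=
  exist _ (rcons (sval v) a) (rcons_neq_nil (sval v) a).
End Words.

(* Pointed lasso automaton; X1 and X2 are separate types (hence disjoint). *)
Record PLA (S : finType) := {
  X1 : Type;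
  X2 : Type;
  xbar : X1;
  delta1 : X1 -> S -> X1;
  delta2 : X1 -> S -> X2;
  delta3 : X2 -> S -> X2 }.

Section Automaton.
Variables (S : finType) (X : PLA S).

Definition delta1s (x : X1 X) (u : seq S) : X1 X := foldl (@delta1 S X) x u.
Definition delta3s (y : X2 X) (u : seq S) : X2 X := foldl (@delta3 S X) y u.

Definition delta_o (x : X1 X) (w : neword S) : X2 X :=
  match sval w as s return s != [::] -> X2 X with
  | [::] => fun H => False_rect _ (eq_ind false (fun b : bool => if b then False else True) I true H)
  | a :: v => fun _ => delta3s (delta2 x a) v
  end (svalP w).

Definition delta (x : X1 X) (l : lasso S) : X2 X := delta_o (delta1s x l.1) l.2.

Definition reachable : Prop :=
  (forall x : X1 X, exists w : seq S, delta1s (xbar X) w = x) /\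
  (forall y : X2 X, exists l : lasso S, delta (xbar X) l = y).

Definition ker_delta1 (u v : seq S) : Prop :=
  forall x : X1 X, delta1s x u = delta1s x v.

Definition ker_delta (l l' : lasso S) : Prop :=
  forall x : X1 X, delta x l = delta x l'.
End Automaton.

Record PLA_morphism (S : finType) (X Y : PLA S) := {
  h1 : X1 X -> X1 Y;
  h2 : X2 X -> X2 Y;
  h_init : h1 (xbar X) = xbar Y;
  h_delta1 : forall x a, h1 (delta1 x a) = delta1 (h1 x) a;
  h_delta2 : forall x a, h2 (delta2 x a) = delta2 (h1 x) a;
  h_delta3 : forall y a, h2 (delta3 y a) = delta3 (h2 y) a }.

Definition equivalence_rel (T : Type) (R : T -> T -> Prop) : Prop :=
  (forall x, R x x) /\ (forall x y, R x y -> R y x) /\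
  (forall x y z, R x y -> R y z -> R x z).

Definition bisim_congruence (S : finType)
  (C1 : seq S -> seq S -> Prop) (C2 : lasso S -> lasso S -> Prop) : Prop :=
  equivalence_rel C1 /\ equivalence_rel C2 /\
      (forall u u' v v', C1 u u' -> C1 v v' -> C1 (u ++ v) (u' ++ v')) /\
      (forall w w' u v u' v', C1 w w' -> C2 (u, v) (u', v') ->
          C2 (w ++ u, v) (w' ++ u', v')) /\
      (forall u u' (a : S), C1 u u' ->
          C1 (rcons u a) (rcons u' a) /\ C2 (u, ne_single a) (u', ne_single a)) /\
      (forall u v u' v' (a : S), C2 (u, v) (u', v') ->
          C2 (u, ne_rcons v a) (u', ne_rcons v' a)).

(* Main.v *)
Require Import Defs.
From mathcomp Require Import all_boot.

Lemma delta_o_rcons (S : finType) (X : PLA S) (y : X1 X) (v : neword S) a :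
  delta_o y (ne_rcons v a) = delta3 (delta_o y v) a.
Proof.
case: v => [[|b v] H] //.
by rewrite /delta_o /= /delta3s foldl_rcons.
Qed.

Lemma delta_cat (S : finType) (X : PLA S) (x : X1 X) w u (v : neword S) :
  delta x (w ++ u, v) = delta (delta1s x w) (u, v).
Proof. by rewrite /delta /delta1s /= foldl_cat. Qed.

Lemma delta_single (S : finType) (X : PLA S) (x : X1 X) u (a : S) :
  delta x (u, ne_single a) = delta2 (delta1s x u) a.
Proof. by []. Qed.

Lemma delta_morph (S : finType) (X Y : PLA S) (h : PLA_morphism X Y) (x : X1 X) (l : lasso S) :
  delta (h1 h x) l = h2 h (delta x l).
Proof.
case: l => u [[|b v] H] //.
rewrite /delta /delta_o /=.
have E1 : forall x u, delta1s (h1 h x) u = h1 h (delta1s x u).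
  move=> x0 u0; elim: u0 x0 => [|c u0 IH] x0 //=.
  by rewrite /delta1s /= -h_delta1; apply: IH.
rewrite E1 -h_delta2.
move: (delta2 _ b) => z; elim: v z {H} => [|c v IH] z //=.
by rewrite /delta3s /= -h_delta3; apply: IH.
Qed.

Lemma delta1s_morph (S : finType) (X Y : PLA S) (h : PLA_morphism X Y) (x : X1 X) (u : seq S) :
  delta1s (h1 h x) u = h1 h (delta1s x u).
Proof.
elim: u x => [|c u IH] x //=.
by rewrite /delta1s /= -h_delta1; apply: IH.
Qed.

Theorem mainTheorem10 (S : finType) :
  (forall X : PLA S, reachable X ->
     bisim_congruence (ker_delta1 X) (ker_delta X)) /\
  (forall (X Y : PLA S), reachable X -> reachable Y ->
     PLA_morphism X Y ->
     (forall u v, ker_delta1 X u v -> ker_delta1 Y u v) /\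
     (forall l l', ker_delta X l l' -> ker_delta Y l l')).
Proof.
split.
  move=> X _; split; [|split; [|split; [|split; [|split]]]].
  - split; [by []|split; [by move=> ? ? H x; rewrite H|]].
    by move=> ? ? ? H1 H2 x; rewrite H1 H2.
  - split; [by []|split; [by move=> ? ? H x; rewrite H|]].
    by move=> ? ? ? H1 H2 x; rewrite H1 H2.
  - move=> u u' v v' Hu Hv x.
    by rewrite /delta1s !foldl_cat -!/(delta1s _ _) Hu Hv.
  - move=> w w' u v u' v' Hw H x.
    by rewrite !delta_cat Hw H.
  - move=> u u' a H; split => x.
      by rewrite /delta1s !foldl_rcons -!/(delta1s _ _) H.
    by rewrite !delta_single H.
  - move=> u v u' v' a H x.
    have := H x; rewrite /delta /= => E.
    by rewrite !delta_o_rcons E.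
move=> X Y RX [RY1 RY2] h; split.
  move=> u v H y; case: (RY1 y) => w <-.
  by rewrite -(h_init h) delta1s_morph !delta1s_morph H.
move=> l l' H y; case: (RY1 y) => w <-.
by rewrite -(h_init h) delta1s_morph !delta_morph H.
Qed.
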